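(* Let $P$ be a tree poset of height $h$ and $x\in P$, let $\varepsilon>0$, and suppose $\delta>0$ is such that for every sufficiently large $n$, every family $\mathcal F\subseteq 2^{[n]}$ with $|\mathcal F|\ge(h-1+\varepsilon)\binom{n}{\lfloor n/2\rfloor}$ contains a copy of $P(x,\delta n)$. Then for every sufficiently large $n$ there exists a function $$f:\binom{2^{[n]}}{\le |P|2^n/\delta n}\to\binom{2^{[n]}}{\le (h-1+\varepsilon)\binom{n}{\lfloor n/2\rfloor}}$$ such that for every $P$-free family $\mathcal F\subseteq 2^{[n]}$ there is a subfamily $\mathcal H\subseteq\mathcal F$ with $\mathcal H\in\binom{2^{[n]}}{\le|P|2^n/\delta n}$ and $\mathcal F\subseteq\mathcal H\cup f(\mathcal H)$.
   Context: For a set $S$ and $t\ge0$, $\binom{S}{\le t}$ denotes the set of all subsets of $S$ of size at most $t$; thus $\binom{2^{[n]}}{\le t}$ is the set of all families of subsets of $[n]$ with at most $t$ members. Posets are finite collections of finite sets ordered by inclusion. A poset homomorphism $\phi:P\to Q$ is a map with $A\subseteq B\Rightarrow \phi(A)\subseteq\phi(B)$; $Q$ contains a copy of $P$ if there is an injective poset homomorphism $P\to Q$, and is $P$-free otherwise. The Hasse diagram of $P$ is the directed graph on $P$ with an edge $A\to B$ when $A\subsetneq B$ and no $C\in P$ has $A\subsetneq C\subsetneq B$; the undirected Hasse diagram forgets orientations. A tree poset is a poset whose undirected Hasse diagram is a tree. The height is the number of elements of a longest chain. For a tree poset $P$, $x\in P$ and an integer $d\ge2$, the $d$-blow-up $P(x,d)$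 rooted at $x$ is the tree poset whose Hasse diagram is obtained as follows: each $u\in P$ at distance $\rho$ from $x$ is replaced by $d^{\rho}$ elements $u^1,\dots,u^{d^\rho}$; for each edge $uv$ of the Hasse diagram with $v$ at distance $\rho-1$ from $x$ (and $u$ at distance $\rho$), the $u^i$ are partitioned into $d^{\rho-1}$ disjoint sets $U^1,\dots,U^{d^{\rho-1}}$ of size $d$ and $v^j$ is joined to every element of $U^j$, with the same orientation as $uv$. Non-integer quantities such as $\delta n$ are rounded down. *)

(* Defs.v *)
From mathcomp Require Import all_boot all_order all_algebra.
From Stdlib Require Import Relations.
From mathcomp Require Import reals.
Set Implicit Arguments. Unset Strict Implicit. Unset Printing Implicit Defensive.
Import Order.TTheory GRing.Theory Num.Theory.

Section PosetDefs.
Variable m : nat.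
Notation S := {set 'I_m}.
Variable P : {set S}.

Definition hasse : rel S := fun A B =>
  [&& A \in P, B \in P, A \proper B &
      [forall C : S, ~~ [&& C \in P, A \proper C & C \proper B]]].

Definition uhasse : rel S := fun A B => hasse A B || hasse B A.

Definition tree_poset : Prop :=
  [/\ P != set0,
      (forall A B, A \in P -> B \in P -> connect uhasse A B) &
      ~ (exists c : seq S, [&& uniq c, 2 < size c & cycle uhasse c])].

Definition is_chain (C : {set S}) : bool :=
  [forall A in C, forall B in C, (A \subset B) || (B \subset A)].

Definition height : nat :=
  \max_(C : {set S} | (C \subset P) && is_chain C) #|C|.

Definition hdist (x u : S) (k : nat) : Prop :=
  (exists s : seq S, [/\ size s = k, path uhasse x s & last x s = u]) /\
  (forall s : seq S, path uhasse x s -> last x s = u -> k <= size s).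

(* d-blow-up P(x,d): element (u,i) stands for u^{i+1}, 0 <= i < d^dist(x,u) *)
Definition bl_elem (x : S) (d : nat) (a : S * nat) : Prop :=
  exists k, hdist x a.1 k /\ a.2 < d ^ k.

(* directed Hasse edge a -> b of P(x,d); the partition of the u^i into blocks
   of size d is taken canonically: block j = {i | i %/ d = j} *)
Definition bl_edge (x : S) (d : nat) (a b : S * nat) : Prop :=
  [/\ bl_elem x d a, bl_elem x d b, hasse a.1 b.1 &
      exists k,
        (hdist x a.1 k.+1 /\ hdist x b.1 k /\ b.2 = a.2 %/ d) \/
        (hdist x b.1 k.+1 /\ hdist x a.1 k /\ a.2 = b.2 %/ d)].

Definition bl_le (x : S) (d : nat) : relation (S * nat) :=
  clos_refl_trans _ (bl_edge x d).

Variable n : nat.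

Definition contains_poset (F : {set {set 'I_n}}) : Prop :=
  exists g : S -> {set 'I_n},
    [/\ (forall A, A \in P -> g A \in F),
        (forall A B, A \in P -> B \in P -> g A = g B -> A = B) &
        (forall A B, A \in P -> B \in P -> A \subset B -> g A \subset g B)].

Definition contains_blowup (F : {set {set 'I_n}}) (x : S) (d : nat) : Prop :=
  exists g : S * nat -> {set 'I_n},
    [/\ (forall a, bl_elem x d a -> g a \in F),
        (forall a b, bl_elem x d a -> bl_elem x d b -> g a = g b -> a = b) &
        (forall a b, bl_le x d a b -> g a \subset g b)].

End PosetDefs.

(* Main.v *)
Require Import Defs.
From mathcomp Require Import all_boot all_order all_algebra.
From mathcomp Require Import reals.
From Stdlib Require Import Relations ClassicalEpsilon.
From mathcomp Require Import zify.
Import Order.TTheory GRing.Theory Num.Theory.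
Set Implicit Arguments. Unset Strict Implicit. Unset Printing Implicit Defensive.

Lemma uhasse_sym m (P : {set {set 'I_m}}) A B : uhasse P A B = uhasse P B A.
Proof. by rewrite /uhasse orbC. Qed.

Lemma uhasse_irr m (P : {set {set 'I_m}}) A : uhasse P A A = false.
Proof. by rewrite /uhasse /hasse properxx !andbF. Qed.

Lemma uhasse_in m (P : {set {set 'I_m}}) A B : uhasse P A B -> (A \in P) && (B \in P).
Proof. by rewrite /uhasse /hasse => /orP [/and4P [-> -> _ _]|/and4P [-> -> _ _]]. Qed.

Definition farther m (P : {set {set 'I_m}}) x k y :=
  forall s, path (uhasse P) x s -> last x s = y -> (k <= size s)%N.

Lemma hdist_uniq m (P : {set {set 'I_m}}) x u k k' :
  hdist P x u k -> hdist P x u k' -> k = k'.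
Proof.
move=> [[s [Hs Hp Hl]] H1] [[s' [Hs' Hp' Hl']] H2].
apply/eqP; rewrite eqn_leq; apply/andP; split.
- by rewrite -Hs'; apply: H1.
- by rewrite -Hs; apply: H2.
Qed.

Lemma hdist_pred m (P : {set {set 'I_m}}) x u k :
  hdist P x u k.+1 -> exists v, uhasse P v u /\ hdist P x v k.
Proof.
move=> [[s [Hs Hp Hl]] Hmin].
case/lastP: s Hs Hp Hl => [|s' y] //.
rewrite size_rcons => -[Hs] Hp Hl; rewrite last_rcons in Hl; subst y.
move: Hp; rewrite rcons_path => /andP [Hp He].
exists (last x s'); split => //; split.
- by exists s'.
- move=> t Ht Hlt; have := Hmin (rcons t u).
  rewrite rcons_path Ht Hlt He last_rcons size_rcons => /(_ erefl erefl).
  by rewrite ltnS.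
Qed.

Lemma hdist_far m (P : {set {set 'I_m}}) x u k :
  hdist P x u k -> farther P x k u.
Proof. by case. Qed.

Lemma hdist_adj m (P : {set {set 'I_m}}) x u v k j :
  uhasse P v u -> hdist P x v k -> hdist P x u j -> (j <= k.+1)%N.
Proof.
move=> He [[s [Hs Hp Hl]] _] [_ Hmin].
have := Hmin (rcons s u); rewrite rcons_path Hp Hl He last_rcons size_rcons Hs.
by apply.
Qed.

Definition acyclic m (P : {set {set 'I_m}}) :=
  ~ (exists c : seq {set 'I_m}, [&& uniq c, 2 < size c & cycle (uhasse P) c]).

Lemma cyc_lemma m (P : {set {set 'I_m}}) x : acyclic P ->
  forall k c1 c2 r, c1 != c2 -> hdist P x c1 k -> hdist P x c2 k ->
    path (uhasse P) c1 r -> last c1 r = c2 -> uniq (c1 :: r) ->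
    (forall y, y \in c1 :: r -> farther P x k y) -> False.
Proof.
move=> Hac; elim=> [|k IH] c1 c2 r Hne H1 H2 Hp Hl Hu Hf.
- move: H1 H2 => [[s1 [Hs1 _ Hl1]] _] [[s2 [Hs2 _ Hl2]] _].
  case: s1 Hs1 Hl1 => // _ /= Hl1; case: s2 Hs2 Hl2 => // _ /= Hl2.
  by move: Hne; rewrite -Hl1 -Hl2 eqxx.
have [p1 [Hp1 Hd1]] := hdist_pred H1.
have [q1 [Hq1 Hd2]] := hdist_pred H2.
have Hnotin : forall z, hdist P x z k -> z \notin c1 :: r.
  move=> z [[s [Hs Hps Hls]] _]; apply/negP => /Hf /(_ s Hps Hls).
  by rewrite Hs ltnn.
have rne : r != [::] by case: {Hnotin} r Hl Hp Hu Hf => //= Hl; move: Hne; rewrite Hl eqxx.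
case: (eqVneq p1 q1) => [Epq|Npq].
- subst q1; apply: Hac; exists (p1 :: c1 :: r).
  have Hp1n := Hnotin _ Hd1.
  apply/and3P; split.
  + by rewrite cons_uniq Hp1n Hu.
  + by case: {Hp Hl Hu Hf Hnotin Hp1n} r rne.
  + rewrite /= rcons_path Hp Hl -(uhasse_sym P p1 c2) Hq1 andbT.
    by rewrite Hp1.
- apply: (IH p1 q1 (c1 :: rcons r q1)) => //.
  + rewrite /= rcons_path Hp Hl Hp1 /=. by rewrite uhasse_sym.
  + by rewrite /= last_rcons.
  + have := Hnotin _ Hd1; have := Hnotin _ Hd2.
    rewrite !inE => /norP [Hq1c Hq1r] /norP [Hp1c Hp1r].
    move: Hu => /= /andP [Hc1r Hur].
    rewrite !inE !mem_rcons !inE rcons_uniq !negb_or (negbTE Hp1c) (negbTE Npq) (negbTE Hp1r) Hq1r Hur (negbTE Hc1r) /=.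
    by rewrite eq_sym Hq1c.
  + move=> y; rewrite !inE mem_rcons !inE.
    case/or4P => [/eqP->|/eqP->|/eqP->|Hy].
    * exact: hdist_far Hd1.
    * by move=> s Hs Hls; have := Hf c1 (mem_head _ _) s Hs Hls; apply: ltnW.
    * exact: hdist_far Hd2.
    * by move=> s Hs Hls; have := Hf y (@mem_behead _ (c1 :: r) y Hy) s Hs Hls; apply: ltnW.
Qed.

Lemma hdist_neq m (P : {set {set 'I_m}}) x u v k : acyclic P ->
  uhasse P u v -> hdist P x u k -> hdist P x v k -> False.
Proof.
move=> Hac He Hu Hv.
have Hne : u != v by apply/eqP => E; move: He; rewrite E uhasse_irr.
apply: (cyc_lemma Hac Hne Hu Hv (r := [:: v])) => //=.
- by rewrite He.
- by rewrite inE Hne.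
- move=> y; rewrite !inE => /orP [/eqP->|/eqP->]; exact: hdist_far.
Qed.

Lemma hdist_adj2 m (P : {set {set 'I_m}}) x u v a b : acyclic P ->
  uhasse P u v -> hdist P x u a -> hdist P x v b -> a = b.+1 \/ b = a.+1.
Proof.
move=> Hac He Hu Hv.
have h2 := hdist_adj He Hu Hv.
have h1 : (a <= b.+1)%N by apply: (hdist_adj _ Hv Hu); rewrite uhasse_sym.
case: (ltngtP a b) => [Hab|Hab|Hab].
- by right; apply/eqP; rewrite eqn_leq h2 Hab.
- by left; apply/eqP; rewrite eqn_leq h1 Hab.
- by subst b; exfalso; apply: (hdist_neq Hac He Hu Hv).
Qed.

Lemma hdist_parent m (P : {set {set 'I_m}}) x u v w k : acyclic P ->
  uhasse P v u -> uhasse P w u -> hdist P x v k -> hdist P x w k ->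
  hdist P x u k.+1 -> v = w.
Proof.
move=> Hac Hv Hw Hdv Hdw Hdu; apply/eqP; apply/negPn/negP => Hne.
have Hvu : v != u.
  by apply/eqP => E; subst v; have := hdist_uniq Hdv Hdu => /n_Sn.
have Hwu : w != u.
  by apply/eqP => E; subst w; have := hdist_uniq Hdw Hdu => /n_Sn.
apply: (cyc_lemma Hac Hne Hdv Hdw (r := [:: u; w])) => //=.
- by rewrite Hv uhasse_sym Hw.
- by rewrite !inE negb_or Hvu Hne eq_sym Hwu.
- move=> y; rewrite !inE => /or3P [/eqP->|/eqP->|/eqP->].
  + exact: hdist_far Hdv.
  + by move=> s Hs Hls; have := hdist_far Hdu Hs Hls; apply: ltnW.
  + exact: hdist_far Hdw.
Qed.

Lemma hdist_ex m (P : {set {set 'I_m}}) x u :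
  connect (uhasse P) x u -> exists k, hdist P x u k.
Proof.
move=> /connectP [s Hs Hl].
pose Q k := [exists t : k.-tuple {set 'I_m}, path (uhasse P) x t && (last x t == u)].
have HQ : exists k, Q k.
  by exists (size s); apply/existsP; exists (in_tuple s); rewrite /= Hs -Hl eqxx.
exists (ex_minn HQ); case: ex_minnP => k /existsP [t /andP [Ht /eqP Hlt]] Hmin.
split.
- by exists t; rewrite size_tuple.
- move=> s' Hs' Hl'; apply: Hmin; apply/existsP; exists (in_tuple s').
  by rewrite /= Hs' Hl' eqxx.
Qed.

Definition dist m (P : {set {set 'I_m}}) x u : nat :=
  epsilon (inhabits 0%N) (fun k => hdist P x u k).

Lemma dist_spec m (P : {set {set 'I_m}}) x u :
  connect (uhasse P) x u -> hdist P x u (dist P x u).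
Proof.
move=> /hdist_ex H; exact: (epsilon_spec (inhabits 0%N) (fun k => hdist P x u k) H).
Qed.

Lemma sub_hasse m (P : {set {set 'I_m}}) A B :
  A \in P -> B \in P -> A \subset B -> clos_refl_trans _ (hasse P) A B.
Proof.
move: (leqnn (#|B| - #|A|)); move: {2}(#|B| - #|A|) => k.
elim: k A B => [|k IH] A B Hk HA HB Hsub.
- case: (eqVneq A B) => [->|Hne]; first exact: rt_refl.
  have Hp : A \proper B by rewrite properEneq Hne Hsub.
  have := proper_card Hp; move: Hk; rewrite leqn0 subn_eq0 => H1 H2.
  by move: (leq_ltn_trans H1 H2); rewrite ltnn.
case: (eqVneq A B) => [->|Hne]; first exact: rt_refl.
have Hp : A \proper B by rewrite properEneq Hne Hsub.
case Hh: (hasse P A B); first exact: rt_step.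
move: Hh; rewrite /hasse HA HB Hp /= => /negbT; rewrite negb_forall => /existsP [C].
rewrite negbK => /and3P [HC HAC HCB].
have cAC := proper_card HAC; have cCB := proper_card HCB.
apply: (rt_trans _ _ _ C).
- apply: IH => //; last exact: proper_sub.
  have := ltnW cAC; lia.
- apply: IH => //; last exact: proper_sub.
  have := ltnW cCB; lia.
Qed.

Definition treeH m (P : {set {set 'I_m}}) x :=
  [/\ acyclic P, x \in P & forall u, u \in P -> connect (uhasse P) x u].

Definition par m (P : {set {set 'I_m}}) x u :=
  odflt x [pick v | uhasse P v u && ((dist P x v).+1 == dist P x u)].

Definition fp m n (g : {set 'I_m} * nat -> {set 'I_n}) (o : pred {set 'I_n}) d b u :=
  find (fun c => o (g (u, b + c))) (iota 0 d).

Fixpoint idxk m n (P : {set {set 'I_m}}) x d (g : {set 'I_m} * nat -> {set 'I_n})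
   (o : pred {set 'I_n}) k u : nat :=
  match k with
  | 0 => 0
  | k'.+1 => d * idxk P x d g o k' (par P x u) +
             fp g o d (d * idxk P x d g o k' (par P x u)) u
  end.

Fixpoint okk m n (P : {set {set 'I_m}}) x d (g : {set 'I_m} * nat -> {set 'I_n})
   (o : pred {set 'I_n}) k u : bool :=
  match k with
  | 0 => o (g (u, 0))
  | k'.+1 => okk P x d g o k' (par P x u) &&
             (fp g o d (d * idxk P x d g o k' (par P x u)) u < d)
  end.

Definition tested m n (P : {set {set 'I_m}}) x d (g : {set 'I_m} * nat -> {set 'I_n})
   (o : pred {set 'I_n}) u : seq {set 'I_n} :=
  match dist P x u with
  | 0 => [::]
  | k.+1 => if okk P x d g o k (par P x u) then
              [seq g (u, d * idxk P x d g o k (par P x u) + c) |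
                 c <- iota 0 (minn (fp g o d (d * idxk P x d g o k (par P x u)) u).+1 d)]
            else [::]
  end.

Definition Tset m n (P : {set {set 'I_m}}) x d (g : {set 'I_m} * nat -> {set 'I_n})
   (o : pred {set 'I_n}) : {set {set 'I_n}} :=
  g (x, 0) |: \bigcup_(u in P) [set y in tested P x d g o u].

Lemma L_dist m (P : {set {set 'I_m}}) x u : treeH P x -> u \in P ->
  hdist P x u (dist P x u).
Proof. by case=> _ _ Hc Hu; apply: dist_spec; apply: Hc. Qed.

Lemma hdist_x m (P : {set {set 'I_m}}) x : hdist P x x 0.
Proof. by split; [exists [::] | ]. Qed.

Lemma dist_x m (P : {set {set 'I_m}}) x : treeH P x -> dist P x x = 0.
Proof.
move=> H; case: (H) => _ Hx _.
exact: (hdist_uniq (L_dist H Hx) (hdist_x P x)).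
Qed.

Lemma L_dist0 m (P : {set {set 'I_m}}) x u : treeH P x -> u \in P ->
  dist P x u = 0 -> u = x.
Proof.
move=> H Hu E; have := L_dist H Hu; rewrite E => -[[s [Hs _ Hl]] _].
by case: s Hs Hl.
Qed.

Lemma L_par m (P : {set {set 'I_m}}) x u k : treeH P x -> u \in P ->
  dist P x u = k.+1 ->
  [/\ par P x u \in P, uhasse P (par P x u) u & dist P x (par P x u) = k].
Proof.
move=> H Hu E.
have := L_dist H Hu; rewrite E => /hdist_pred [v [Hvu Hv]].
have HvP : v \in P by case/andP: (uhasse_in Hvu).
have Dv : dist P x v = k by apply: (hdist_uniq (L_dist H HvP) Hv).
rewrite /par; case: pickP => [w /andP [Hwu /eqP Dw]|Hn] /=.
- have HwP : w \in P by case/andP: (uhasse_in Hwu).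
  by split => //; move: Dw; rewrite E => -[].
- by have := Hn v; rewrite Hvu Dv E eqxx.
Qed.

Lemma fp_pos m n (g : {set 'I_m} * nat -> {set 'I_n}) o d b u :
  (fp g o d b u < d)%N -> o (g (u, b + fp g o d b u)).
Proof.
rewrite /fp => Hlt.
have Hh : has (fun c => o (g (u, b + c))) (iota 0 d) by rewrite has_find size_iota.
have := nth_find 0 Hh; by rewrite nth_iota.
Qed.

Lemma fp_neg m n (g : {set 'I_m} * nat -> {set 'I_n}) o d b u c :
  (c < fp g o d b u)%N -> o (g (u, b + c)) = false.
Proof.
rewrite /fp => Hlt.
have Hcd : (c < d)%N.
  by apply: (leq_trans Hlt); have := find_size (fun c => o (g (u, b + c))) (iota 0 d); rewrite size_iota.
by have := before_find 0 Hlt; rewrite nth_iota.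
Qed.

Lemma fp_le m n (g : {set 'I_m} * nat -> {set 'I_n}) o d b u : (fp g o d b u <= d)%N.
Proof. by rewrite /fp; have := find_size (fun c => o (g (u, b + c))) (iota 0 d); rewrite size_iota. Qed.

Lemma L_ok_pos m n (P : {set {set 'I_m}}) x d (g : {set 'I_m} * nat -> {set 'I_n}) o k u :
  okk P x d g o k u -> o (g (u, idxk P x d g o k u)).
Proof.
case: k => [|k] /=; first by [].
by case/andP => _ /fp_pos.
Qed.

Lemma L_ok_root m n (P : {set {set 'I_m}}) x d (g : {set 'I_m} * nat -> {set 'I_n}) o :
  treeH P x -> forall k u, u \in P -> dist P x u = k ->
  okk P x d g o k u -> o (g (x, 0)).
Proof.
move=> H; elim=> [|k IH] u Hu Du /=.
- by rewrite (L_dist0 H Hu Du).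
- have [Hp _ Dp] := L_par H Hu Du.
  by case/andP => /(IH _ Hp Dp).
Qed.

Lemma L_ok_bound m n (P : {set {set 'I_m}}) x d (g : {set 'I_m} * nat -> {set 'I_n}) o :
  treeH P x -> forall k u, u \in P -> dist P x u = k ->
  okk P x d g o k u -> (idxk P x d g o k u < d ^ k)%N.
Proof.
move=> H; elim=> [|k IH] u Hu Du /=; first by [].
have [Hp _ Dp] := L_par H Hu Du.
case/andP => /(IH _ Hp Dp) Hi Hf.
rewrite expnS.
apply: (@leq_trans (d * (idxk P x d g o k (par P x u)).+1)).
- by rewrite mulnS addnC ltn_add2r.
- by rewrite leq_mul2l Hi orbT.
Qed.

Lemma find_agree (T : eqType) (p1 p2 : pred T) s :
  (forall y, y \in take (find p1 s).+1 s -> p1 y = p2 y) -> find p1 s = find p2 s.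
Proof.
elim: s => [|y s IH] //= Hag.
have Hy := Hag y (mem_head _ _).
rewrite -Hy; case E: (p1 y) => //.
congr S; apply: IH => z Hz; apply: Hag.
by rewrite E /= inE Hz orbT.
Qed.

Lemma find_iota_agree (p1 p2 : pred nat) d :
  (forall c, (c < minn (find p1 (iota 0 d)).+1 d)%N -> p1 c = p2 c) ->
  find p1 (iota 0 d) = find p2 (iota 0 d).
Proof.
move=> H; apply: find_agree => y; rewrite take_iota mem_iota add0n => /andP [_].
exact: H.
Qed.

Lemma fp_agree m n (P : {set {set 'I_m}}) x d (g : {set 'I_m} * nat -> {set 'I_n}) o1 o2 k u :
  treeH P x -> (forall t, t \in Tset P x d g o1 -> o1 t = o2 t) ->
  u \in P -> dist P x u = k.+1 -> okk P x d g o1 k (par P x u) ->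
  fp g o1 d (d * idxk P x d g o1 k (par P x u)) u =
  fp g o2 d (d * idxk P x d g o1 k (par P x u)) u.
Proof.
move=> H Hag Hu Du Hok; apply: find_iota_agree => c Hc; apply: Hag.
rewrite /Tset !inE; apply/orP; right; apply/bigcupP; exists u => //.
rewrite inE /tested Du Hok; apply/mapP; exists c => //.
by rewrite mem_iota.
Qed.

Lemma agree_k m n (P : {set {set 'I_m}}) x d (g : {set 'I_m} * nat -> {set 'I_n}) o1 o2 :
  treeH P x -> (forall t, t \in Tset P x d g o1 -> o1 t = o2 t) ->
  forall k u, u \in P -> dist P x u = k ->
  okk P x d g o1 k u = okk P x d g o2 k u /\
  (okk P x d g o1 k u -> idxk P x d g o1 k u = idxk P x d g o2 k u).
Proof.
move=> H Hag; elim=> [|k IH] u Hu Du /=.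
- split => //; apply: Hag.
  by rewrite /Tset (L_dist0 H Hu Du) !inE eqxx.
- have [Hp _ Dp] := L_par H Hu Du.
  have [E1 E2] := IH _ Hp Dp.
  case Hok: (okk P x d g o1 k (par P x u)); last by rewrite -E1 Hok.
  have Ei := E2 Hok; have Ef := fp_agree H Hag Hu Du Hok.
  by rewrite -E1 Hok -Ei -Ef.
Qed.

Lemma tested_agree m n (P : {set {set 'I_m}}) x d (g : {set 'I_m} * nat -> {set 'I_n}) o1 o2 u :
  treeH P x -> (forall t, t \in Tset P x d g o1 -> o1 t = o2 t) ->
  u \in P -> tested P x d g o1 u = tested P x d g o2 u.
Proof.
move=> H Hag Hu; rewrite /tested.
case Du: (dist P x u) => [|k] //.
have [Hp _ Dp] := L_par H Hu Du.
have [E1 E2] := agree_k H Hag Hp Dp.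
case Hok: (okk P x d g o1 k (par P x u)); last by rewrite -E1 Hok.
have Ei := E2 Hok; have Ef := fp_agree H Hag Hu Du Hok.
by rewrite -E1 Hok -Ei -Ef.
Qed.

Lemma Tset_agree m n (P : {set {set 'I_m}}) x d (g : {set 'I_m} * nat -> {set 'I_n}) o1 o2 :
  treeH P x -> (forall t, t \in Tset P x d g o1 -> o1 t = o2 t) ->
  Tset P x d g o2 = Tset P x d g o1.
Proof.
move=> H Hag; rewrite /Tset; congr (_ |: _); apply: eq_bigr => u Hu.
by rewrite (tested_agree H Hag Hu).
Qed.

Definition blow m n (P : {set {set 'I_m}}) x d (A : {set {set 'I_n}})
    (g : {set 'I_m} * nat -> {set 'I_n}) :=
  [/\ (forall a, bl_elem P x d a -> g a \in A),
      (forall a b, bl_elem P x d a -> bl_elem P x d b -> g a = g b -> a = b) &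
      (forall a b, bl_le P x d a b -> g a \subset g b)].

Lemma tested_mem m n (P : {set {set 'I_m}}) x d (g : {set 'I_m} * nat -> {set 'I_n}) o u y :
  treeH P x -> u \in P -> y \in tested P x d g o u ->
  exists k c, [/\ dist P x u = k.+1, okk P x d g o k (par P x u),
     (c < minn (fp g o d (d * idxk P x d g o k (par P x u)) u).+1 d)%N &
     y = g (u, d * idxk P x d g o k (par P x u) + c)].
Proof.
move=> H Hu; rewrite /tested; case Du: (dist P x u) => [|k] //.
case Hok: (okk P x d g o k (par P x u)) => //.
case/mapP => c; rewrite mem_iota add0n => Hc ->.
by exists k, c.
Qed.

Lemma Tset_bl m n (P : {set {set 'I_m}}) x d (g : {set 'I_m} * nat -> {set 'I_n}) o y :
  treeH P x -> y \in Tset P x d g o -> exists a, bl_elem P x d a /\ y = g a.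
Proof.
move=> H; rewrite /Tset !inE => /orP [/eqP ->|/bigcupP [u Hu]].
- by exists (x, 0%N); split => //; exists 0%N; split => //; apply: hdist_x.
- rewrite inE => /(tested_mem H Hu) [k [c [Du Hok Hc ->]]].
  exists (u, d * idxk P x d g o k (par P x u) + c); split => //.
  exists k.+1; split; first by rewrite -Du; apply: L_dist.
  have [Hp _ Dp] := L_par H Hu Du.
  have Hi := L_ok_bound H Hp Dp Hok.
  have Hcd : (c < d)%N by move: Hc; rewrite leq_min => /andP [_].
  rewrite /= expnS.
  apply: (@leq_trans (d * (idxk P x d g o k (par P x u)).+1)).
  + by rewrite mulnS addnC ltn_add2r.
  + by rewrite leq_mul2l Hi orbT.
Qed.

Lemma Tset_sub m n (P : {set {set 'I_m}}) x d (g : {set 'I_m} * nat -> {set 'I_n}) o A :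
  treeH P x -> blow P x d A g -> Tset P x d g o \subset A.
Proof.
move=> H [H1 _ _]; apply/subsetP => y /(Tset_bl H) [a [Ha ->]]; exact: H1.
Qed.

Lemma root_in m n (P : {set {set 'I_m}}) x d (g : {set 'I_m} * nat -> {set 'I_n}) o :
  g (x, 0%N) \in Tset P x d g o.
Proof. by rewrite /Tset !inE eqxx. Qed.

Lemma pos_sub m n (P : {set {set 'I_m}}) x d (g : {set 'I_m} * nat -> {set 'I_n}) o :
  treeH P x -> [set y in Tset P x d g o | o y] \subset
     [set g (u, idxk P x d g o (dist P x u) u) | u in P].
Proof.
move=> H; apply/subsetP => y; rewrite !inE => /andP [/orP [/eqP ->|/bigcupP [u Hu Hyu]] Hy].
- case: (H) => _ Hx _; apply/imsetP; exists x => //.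
  by rewrite (dist_x H).
- move: Hyu; rewrite inE => /(tested_mem H Hu) [k [c [Du Hok Hc Ey]]].
  apply/imsetP; exists u => //; rewrite Du /= Ey.
  have Hc' : (c <= fp g o d (d * idxk P x d g o k (par P x u)) u)%N.
    by move: Hc; rewrite leq_min => /andP [].
  move: Hc'; rewrite leq_eqVlt => /orP [/eqP -> //|Hlt].
  by move: Hy; rewrite Ey (fp_neg Hlt).
Qed.

Lemma count_pos m n (P : {set {set 'I_m}}) x d (g : {set 'I_m} * nat -> {set 'I_n}) o :
  treeH P x -> (#|[set y in Tset P x d g o | o y]| <= #|P|)%N.
Proof.
move=> H; apply: (leq_trans (subset_leq_card (@pos_sub _ _ P x d g o H))).
exact: leq_imset_card.
Qed.

Lemma root_neg m n (P : {set {set 'I_m}}) x d (g : {set 'I_m} * nat -> {set 'I_n}) o :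
  treeH P x -> ~~ o (g (x, 0%N)) -> [set y in Tset P x d g o | o y] = set0.
Proof.
move=> H Hn; apply/setP => y; rewrite !inE.
apply/negP => /andP [/orP [/eqP ->|/bigcupP [u Hu Hyu]] Hy].
- by rewrite Hy in Hn.
- move: Hyu; rewrite inE => /(tested_mem H Hu) [k [c [Du Hok Hc Ey]]].
  have [Hp _ Dp] := L_par H Hu Du.
  by rewrite (L_ok_root H Hp Dp Hok) in Hn.
Qed.

Lemma fail_count m n (P : {set {set 'I_m}}) x d (g : {set 'I_m} * nat -> {set 'I_n}) (o : pred {set 'I_n}) A u :
  treeH P x -> blow P x d A g -> o (g (x, 0%N)) -> u \in P ->
  ~~ okk P x d g o (dist P x u) u ->
  (forall v, v \in P -> (dist P x v < dist P x u)%N -> okk P x d g o (dist P x v) v) ->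
  (d + #|[set y in Tset P x d g o | o y]| <= #|Tset P x d g o|)%N.
Proof.
move=> H [_ Hinj _] Hr Hu Hnok Hmin.
case Du: (dist P x u) Hnok Hmin => [|k] Hnok Hmin.
  by move: Hnok; rewrite (L_dist0 H Hu Du) /= Hr.
have [Hp _ Dp] := L_par H Hu Du.
have Hokp : okk P x d g o k (par P x u).
  by rewrite -Dp; apply: Hmin => //; rewrite Dp.
set i := idxk P x d g o k (par P x u).
have Efp : fp g o d (d * i) u = d.
  apply/eqP; rewrite eqn_leq fp_le /=; move: Hnok => /=; rewrite Hokp /= -/i.
  by rewrite -leqNgt.
have Et : tested P x d g o u = [seq g (u, d * i + c) | c <- iota 0 d].
  by rewrite /tested Du Hokp -/i Efp (minn_idPr (leqnSn d)).
have Hib := L_ok_bound H Hp Dp Hokp.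
have Hbl : forall c, (c < d)%N -> bl_elem P x d (u, d * i + c).
  move=> c Hc; exists k.+1; split; first by rewrite -Du; apply: L_dist.
  rewrite /= expnS.
  apply: (@leq_trans (d * i.+1)).
  + by rewrite mulnS addnC ltn_add2r.
  + by rewrite leq_mul2l Hib orbT.
have Hcard : #|[set y in tested P x d g o u]| = d.
  rewrite Et cardsE; apply/eqP; rewrite -[X in _ == X](size_iota 0 d).
  rewrite -(size_map (fun c => g (u, d * i + c))); apply/eqP/card_uniqP.
  rewrite map_inj_in_uniq ?iota_uniq // => c1 c2; rewrite !mem_iota !add0n => H1 H2 E.
  by have := Hinj _ _ (Hbl _ H1) (Hbl _ H2) E => -[/addnI].
have Hdisj : [disjoint [set y in tested P x d g o u] & [set y in Tset P x d g o | o y]].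
  apply/pred0P => y /=; rewrite !inE Et; apply/negP => /andP [/mapP [c Hc ->] /andP [_ Hy]].
  move: Hc Hy; rewrite mem_iota add0n => Hc.
  have Hn : o (g (u, d * i + c)) = false.
    by apply: (@fp_neg _ _ g o d (d * i) u c); rewrite Efp.
  by rewrite Hn.
rewrite -{1}Hcard -cardsUI (disjoint_setI0 Hdisj) cards0 addn0.
apply: subset_leq_card; apply/subsetP => y; rewrite !inE => /orP [Hy|/andP [-> _] //].
apply/orP; right; apply/bigcupP; exists u => //; by rewrite inE.
Qed.

Lemma edge_idx m n (P : {set {set 'I_m}}) x d (g : {set 'I_m} * nat -> {set 'I_n})
   (o : pred {set 'I_n}) u v :
  treeH P x -> u \in P -> v \in P -> uhasse P u v ->
  dist P x u = (dist P x v).+1 -> okk P x d g o (dist P x u) u ->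
  idxk P x d g o (dist P x v) v = idxk P x d g o (dist P x u) u %/ d.
Proof.
move=> H Hu Hv Huv Du Hok.
have [Hp Hpu Dp] := L_par H Hu Du.
case: (H) => Hac _ _.
have Ep : par P x u = v.
  have Hdp : hdist P x (par P x u) (dist P x v) by rewrite -Dp; apply: L_dist.
  have Hdu : hdist P x u (dist P x v).+1 by rewrite -Du; apply: L_dist.
  apply: (hdist_parent Hac Hpu _ Hdp (L_dist H Hv) Hdu).
  by rewrite uhasse_sym.
move: Hok; rewrite Du /= Ep => /andP [_ Hf].
have Hd : (0 < d)%N by apply: leq_ltn_trans Hf.
rewrite mulnC divnMDl // divn_small; [lia | by rewrite mulnC].
Qed.

Lemma all_ok_copy m n (P : {set {set 'I_m}}) x d (g : {set 'I_m} * nat -> {set 'I_n})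
   (o : pred {set 'I_n}) A :
  treeH P x -> blow P x d A g ->
  (forall u, u \in P -> okk P x d g o (dist P x u) u) ->
  contains_poset P [set y | o y].
Proof.
move=> H [_ Hinj Hmon] Hall.
pose idx u := idxk P x d g o (dist P x u) u.
have Hbl : forall u, u \in P -> bl_elem P x d (u, idx u).
  move=> u Hu; exists (dist P x u); split; first exact: L_dist.
  exact: (L_ok_bound H Hu erefl (Hall u Hu)).
have Hedge : forall a b, hasse P a b -> bl_edge P x d (a, idx a) (b, idx b).
  move=> a b Hab.
  have [Ha Hb _ _] := and4P Hab.
  have Huab : uhasse P a b by rewrite /uhasse Hab.
  split; [exact: Hbl | exact: Hbl | exact: Hab | ].
  case: (H) => Hac _ _.
  case: (hdist_adj2 Hac Huab (L_dist H Ha) (L_dist H Hb)) => E.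
  - exists (dist P x b); left; split; first by rewrite -E; apply: L_dist.
    split; first exact: L_dist.
    exact: (edge_idx H Ha Hb Huab E (Hall a Ha)).
  - exists (dist P x a); right; split; first by rewrite -E; apply: L_dist.
    split; first exact: L_dist.
    apply: (edge_idx H Hb Ha _ E (Hall b Hb)).
    by rewrite uhasse_sym.
have Hle : forall a b, clos_refl_trans _ (hasse P) a b -> bl_le P x d (a, idx a) (b, idx b).
  move=> a b; elim => [a' b' /Hedge|a'|a' b' c' _ IH1 _ IH2].
  - by apply: rt_step.
  - exact: rt_refl.
  - exact: (rt_trans _ _ _ _ _ IH1 IH2).
exists (fun u => g (u, idx u)); split.
- by move=> u Hu; rewrite inE; exact: (L_ok_pos (Hall u Hu)).
- move=> u v Hu Hv E; have := Hinj _ _ (Hbl u Hu) (Hbl v Hv) E.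
  by case.
- move=> a b Ha Hb Hab; apply: Hmon; apply: (Hle a b); exact: sub_hasse.
Qed.

Lemma step_acc m n (P : {set {set 'I_m}}) x d (g : {set 'I_m} * nat -> {set 'I_n})
   (A F : {set {set 'I_n}}) :
  treeH P x -> blow P x d A g -> ~ contains_poset P F ->
  #|[set y in Tset P x d g (fun t => t \in F) | y \in F]| = 0%N \/
  (d + #|[set y in Tset P x d g (fun t => t \in F) | y \in F]|
     <= #|Tset P x d g (fun t => t \in F)|)%N.
Proof.
move=> H Hb Hfree.
set o := (fun t => t \in F).
case Hr: (o (g (x, 0%N))); last first.
  by left; rewrite (@root_neg _ _ P x d g o H (negbT Hr)) cards0.
right.
pose Q k := [exists u in P, (dist P x u == k) && ~~ okk P x d g o (dist P x u) u].
case: (pickP [pred u | (u \in P) && ~~ okk P x d g o (dist P x u) u]) => [u0 /andP [Hu0 Hn0]|Hno].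
- have HQ : exists k, Q k.
    by exists (dist P x u0); apply/exists_inP; exists u0 => //; rewrite eqxx.
  case: (ex_minnP HQ) => k /exists_inP [u Hu /andP [/eqP Du Hnok]] Hmin.
  apply: (fail_count H Hb Hr Hu Hnok) => v Hv Hlt.
  apply/negPn/negP => Hnv.
  have : (k <= dist P x v)%N by apply: Hmin; apply/exists_inP; exists v => //; rewrite eqxx.
  by rewrite -Du leqNgt Hlt.
- exfalso; apply: Hfree.
  have -> : F = [set y | o y] by apply/setP => y; rewrite inE.
  apply: (all_ok_copy H Hb) => u Hu; apply/negPn/negP => Hnok.
  by have := Hno u; rewrite /= Hu Hnok.
Qed.

Definition gsel m n (P : {set {set 'I_m}}) x d (A : {set {set 'I_n}}) :
    {set 'I_m} * nat -> {set 'I_n} :=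
  epsilon (inhabits (fun _ => set0)) (fun g => blow P x d A g).

Fixpoint run m n (P : {set {set 'I_m}}) x d (small : pred {set {set 'I_n}})
    (o : pred {set 'I_n}) k (A : {set {set 'I_n}}) : {set {set 'I_n}} * {set {set 'I_n}} :=
  match k with
  | 0 => (A, set0)
  | k'.+1 => if small A then (A, set0) else
      let T := Tset P x d (gsel P x d A) o in
      let r := run P x d small o k' (A :\: T) in
      (r.1, [set y in T | o y] :|: r.2)
  end.

Lemma run_agree m n (P : {set {set 'I_m}}) x d small (F : {set {set 'I_n}}) :
  treeH P x -> forall k A (H' : {set {set 'I_n}}), (run P x d small (fun t => t \in F) k A).2 \subset H' ->
  H' \subset F ->
  run P x d small (fun t => t \in H') k A = run P x d small (fun t => t \in F) k A.
Proof.
move=> H; elim=> [|k IH] A H' //= Hsub HF.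
case: (small A) Hsub => //= Hsub.
set g := gsel P x d A.
have Hag : forall t, t \in Tset P x d g (fun t => t \in F) ->
    (t \in F) = (t \in H').
  move=> t Ht; case HtF: (t \in F).
  - apply/esym; apply: (subsetP Hsub); apply/setUP; left; by rewrite in_set Ht HtF.
  - by apply/esym/negbTE/negP => /(subsetP HF); rewrite HtF.
have ET := Tset_agree H Hag.
rewrite ET.
have Epos : [set y in Tset P x d g (fun t => t \in F) | y \in H'] =
            [set y in Tset P x d g (fun t => t \in F) | y \in F].
  apply/setP => y; apply/idP/idP => /setIdP [Hy Hy']; apply/setIdP; split => //.
  - by rewrite Hag.
  - by rewrite -Hag.
rewrite Epos IH //.
by apply: subset_trans Hsub; apply: subsetUr.
Qed.

Lemma run_small m n (P : {set {set 'I_m}}) x d (small : pred {set {set 'I_n}}) o :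
  (forall A, ~~ small A -> blow P x d A (gsel P x d A)) ->
  forall k (A : {set {set 'I_n}}), (#|A| < k)%N -> small (run P x d small o k A).1.
Proof.
move=> Hb; elim=> [|k IH] A //= HA.
case Hs: (small A) => //=.
apply: IH.
have [H1 _ _] := Hb A (negbT Hs).
have Hroot : gsel P x d A (x, 0%N) \in A.
  by apply: H1; exists 0%N; split => //; apply: hdist_x.
rewrite -ltnS; apply: leq_trans HA.
rewrite ltnS -(cardsID (Tset P x d (gsel P x d A) o) A) -[X in (X < _)%N]add0n ltn_add2r.
by rewrite card_gt0; apply/set0Pn; exists (gsel P x d A (x, 0%N)); rewrite inE Hroot root_in.
Qed.

Lemma run_cover m n (P : {set {set 'I_m}}) x d small (F : {set {set 'I_n}}) :
  forall k A, F :&: A \subset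
    (run P x d small (fun t => t \in F) k A).2 :|: (run P x d small (fun t => t \in F) k A).1.
Proof.
elim=> [|k IH] A /=.
  by apply/subsetP => y; rewrite !inE => /andP [_ ->]; rewrite orbT.
case: (small A) => /=.
  by apply/subsetP => y; rewrite !inE => /andP [_ ->]; rewrite orbT.
set T := Tset _ _ _ _ _.
apply/subsetP => y; rewrite inE => /andP [HyF HyA].
case HyT: (y \in T).
  by apply/setUP; left; apply/setUP; left; apply/setIdP.
have : y \in F :&: (A :\: T) by rewrite in_setI in_setD HyT HyF HyA.
move/(subsetP (IH (A :\: T))); case/setUP => Hy; apply/setUP; [left; apply/setUP; right|right] => //.
Qed.

Lemma run_pos_sub m n (P : {set {set 'I_m}}) x d small (F : {set {set 'I_n}}) :
  forall k A, (run P x d small (fun t => t \in F) k A).2 \subset F.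
Proof.
elim=> [|k IH] A /=; first exact: sub0set.
case: (small A) => /=; first exact: sub0set.
rewrite subUset IH andbT; apply/subsetP => y; rewrite inE => /andP [_ ->] //.
Qed.


Local Open Scope ring_scope.

Lemma step_real (R : realType) m n (P : {set {set 'I_m}}) x d (g : {set 'I_m} * nat -> {set 'I_n})
   (A F : {set {set 'I_n}}) (r : R) :
  treeH P x -> blow P x d A g -> ~ contains_poset P F -> 0 <= r -> r < (d.+1)%:R ->
  (#|[set y in Tset P x d g (fun t => t \in F) | y \in F]|)%:R * r <=
  (#|P|)%:R * (#|Tset P x d g (fun t => t \in F)|)%:R.
Proof.
move=> H Hb Hf Hr0 Hr.
have Hc := @count_pos _ _ P x d g (fun t => t \in F) H.
move: Hc (step_acc H Hb Hf).
set c := #|[set y in _ | _]|; set t := #|Tset _ _ _ _ _| => Hc.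
case: (posnP c) => [->|Hc1]; first by rewrite mul0r mulr_ge0 ?ler0n.
case => [E|Hs]; first by rewrite E in Hc1.
apply: (@le_trans _ _ ((#|P|)%:R * r)).
  by rewrite ler_wpM2r // ler_nat.
apply: ler_wpM2l; first exact: ler0n.
apply: (le_trans (ltW Hr)); rewrite ler_nat.
by apply: leq_trans Hs; rewrite -addn1 leq_add2l.
Qed.

Lemma run_count (R : realType) m n (P : {set {set 'I_m}}) x d small (F : {set {set 'I_n}}) (r : R) :
  treeH P x -> (forall A, ~~ small A -> blow P x d A (gsel P x d A)) ->
  ~ contains_poset P F -> 0 <= r -> r < (d.+1)%:R ->
  forall k A, (#|(run P x d small (fun t => t \in F) k A).2|)%:R * r <=
              (#|P|)%:R * (#|A|)%:R.
Proof.
move=> H Hb Hf Hr0 Hr; elim=> [|k IH] A /=.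
  by rewrite cards0 mul0r mulr_ge0 ?ler0n.
case Hs: (small A) => /=.
  by rewrite cards0 mul0r mulr_ge0 ?ler0n.
have HbA := Hb A (negbT Hs).
set g := gsel P x d A.
set T := Tset P x d g (fun t => t \in F).
set r2 := (run _ _ _ _ _ k (A :\: T)).2.
have HTA : T \subset A by apply: Tset_sub HbA.
have HS := step_real H HbA Hf Hr0 Hr; rewrite -/T in HS.
have IH2 := IH (A :\: T); rewrite -/r2 in IH2.
have HcA : #|A| = (#|T| + #|A :\: T|)%N.
  by rewrite -(cardsID T A) (setIidPr HTA).
apply: (@le_trans _ _ ((#|[set y in T | y \in F]| + #|r2|)%:R * r)).
  rewrite ler_wpM2r // ler_nat; rewrite -cardsUI; exact: leq_addr.
rewrite natrD mulrDl HcA natrD mulrDr.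
exact: lerD.
Qed.

Unset Implicit Arguments.
Set Strict Implicit.

Theorem lemma3p1 (R : realType) (m : nat) (P : {set {set 'I_m}})
    (x : {set 'I_m}) (eps delta : R) :
  tree_poset P -> x \in P -> 0 < eps -> 0 < delta ->
  (exists N : nat, forall n : nat, (N <= n)%N ->
     forall F : {set {set 'I_n}},
       ((height P)%:R - 1 + eps) * ('C(n, n./2))%:R <= (#|F|)%:R ->
       contains_blowup P F x (Num.truncn (delta * n%:R))) ->
  exists N : nat, forall n : nat, (N <= n)%N ->
    exists f : {set {set 'I_n}} -> {set {set 'I_n}},
      (forall H : {set {set 'I_n}},
          (#|H|)%:R <= (#|P|)%:R * 2 ^+ n / (delta * n%:R) ->
          (#|f H|)%:R <= ((height P)%:R - 1 + eps) * ('C(n, n./2))%:R) /\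
      (forall F : {set {set 'I_n}}, ~ contains_poset P F ->
         exists H : {set {set 'I_n}},
           [/\ H \subset F,
               (#|H|)%:R <= (#|P|)%:R * 2 ^+ n / (delta * n%:R) &
               F \subset H :|: f H]).
Proof.
move=> [_ Hconn Hac] Hx Heps Hdelta [N0 HN0].
have HT : treeH P x by split => // u Hu; apply: Hconn.
exists (maxn N0 1) => n Hn.
set B := ((height P)%:R - 1 + eps) * ('C(n, n./2))%:R.
set d := Num.truncn (delta * n%:R).
pose small (A : {set {set 'I_n}}) := (#|A|)%:R < B.
have Hb : forall A, ~~ small A -> blow P x d A (gsel P x d A).
  move=> A; rewrite /small -leNgt => HA.
  have := HN0 n (leq_trans (leq_maxl _ _) Hn) A HA.
  exact: (epsilon_spec (inhabits (fun _ => set0)) (fun g => blow P x d A g)).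
pose fuel := (#|{set 'I_n}|).+1.
have Hfuel : (#|[set: {set 'I_n}]| < fuel)%N by rewrite cardsT.
have Hr0 : 0 < delta * n%:R.
  rewrite mulr_gt0 // ltr0n; apply: leq_trans Hn; exact: leq_maxr.
have Hr1 : delta * n%:R < (d.+1)%:R by apply: truncnS_gt.
have Hcard : (#|[set: {set 'I_n}]|)%:R = 2 ^+ n :> R.
  by rewrite -powersetT card_powerset cardsT card_ord natrX.
exists (fun H : {set {set 'I_n}} => (run P x d small (fun t => t \in H) fuel setT).1); split.
- move=> H _; apply: ltW.
  exact: (run_small (fun t => t \in H) Hb Hfuel).
- move=> F Hfree.
  set H := (run P x d small (fun t => t \in F) fuel setT).2.
  have HF : H \subset F by apply: run_pos_sub.
  exists H; split => //.
  + rewrite ler_pdivlMr // -Hcard.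
    exact: (run_count HT Hb Hfree (ltW Hr0) Hr1).
  + rewrite (run_agree HT (subxx H) HF).
    have := run_cover P x d small F fuel setT.
    by rewrite setIT.
Qed.
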